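(* Let $n\ge 1$, let $\gamma_1,\dots,\gamma_n\in\mathbb{C}$, and let $f,s_1,\dots,s_n$ be $(n-1)$-times differentiable functions of $z$. Then $$W^{\gamma_1,\dots,\gamma_n}_n(f s_1,\dots,f s_n)=f^n\cdot W^{\gamma_1,\dots,\gamma_n}_n(s_1,\dots,s_n).$$
   Context: For constants $\gamma_1,\dots,\gamma_n$ put $\nabla_i=\partial_z+\gamma_i$. The $Z$-twisted Wronskian ($Z=\mathrm{diag}(\gamma_1,\dots,\gamma_n)$) of functions $s_1,\dots,s_n$ is the determinant $$W^{\gamma_1,\dots,\gamma_n}_n(s_1,\dots,s_n)=\det_{1\le i,j\le n}\big[\nabla_i^{\,j-1}s_i\big].$$ *)

(* Defs.v *)
From HB Require Import structures.
From mathcomp Require Import all_boot all_order all_algebra.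
From mathcomp Require Import all_classical all_reals all_analysis.
From mathcomp Require Import complex.
Set Implicit Arguments. Unset Strict Implicit. Unset Printing Implicit Defensive.
Import Order.TTheory GRing.Theory Num.Theory.
Import numFieldNormedType.Exports.
Local Open Scope ring_scope.
Local Open Scope classical_set_scope.

(* C viewed as a numFieldType, so that MathComp-Analysis equips it with the
   norm topology of the complex modulus and complex derivatives apply. *)
Definition cplx (R : realType) : numFieldType := R[i].

Definition tnabla (R : realType) (g : cplx R) (h : cplx R -> cplx R) : cplx R -> cplx R :=
  fun z => derive1 h z + g * h z.

(* Z-twisted Wronskian: det [ nabla_i^(j-1) s_i ]_{i,j}  (0-indexed here). *)
Definition twronskian (R : realType) (n : nat) (gam : 'I_n -> cplx R)
  (s : 'I_n -> cplx R -> cplx R) (z : cplx R) : cplx R :=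
  \det (\matrix_(i < n, j < n) iter j (tnabla (gam i)) (s i) z).

(* Main.v *)
Require Import Defs.
From HB Require Import structures.
From mathcomp Require Import all_boot all_order all_algebra.
From mathcomp Require Import all_classical all_reals all_analysis.
From mathcomp Require Import complex.
From mathcomp Require Import ring.
Import Order.TTheory GRing.Theory Num.Theory.
Import numFieldNormedType.Exports.
Local Open Scope ring_scope.
Local Open Scope classical_set_scope.

Section S.
Variable R : realType.
Local Notation C := (cplx R).

Lemma dmulE (g h : C -> C) z : derivable g z 1 -> derivable h z 1 ->
  derive1 (fun x => g x * h x) z = derive1 g z * h z + g z * derive1 h z.
Proof.
move=> dg dh.
have := deriveM dg dh.
rewrite !derive1E => E.
rewrite -[LHS]/('D_1 (g * h) z). rewrite E.
rewrite addrC mulrC.  reflexivity.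
Qed.
Lemma daddE (g h : C -> C) z : derivable g z 1 -> derivable h z 1 ->
  derive1 (fun x => g x + h x) z = derive1 g z + derive1 h z.
Proof.
move=> dg dh.
have := deriveD dg dh.
rewrite !derive1E => E.
rewrite -[LHS]/('D_1 (g + h) z). rewrite E. done.
Qed.

Lemma dcst (c : C) z : derivable (fun _ : C => c) z 1 /\ derive1 (fun _ : C => c) z = 0.
Proof. split; [apply: derivable_cst | apply: derive1_cst]. Qed.

Lemma dmul (g h : C -> C) z : derivable g z 1 -> derivable h z 1 ->
  derivable (fun x => g x * h x) z 1.
Proof. move=> dg dh; have := derivableM dg dh; apply. Qed.

Lemma dadd (g h : C -> C) z : derivable g z 1 -> derivable h z 1 ->
  derivable (fun x => g x + h x) z 1.
Proof. move=> dg dh; have := derivableD dg dh; apply. Qed.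

Fixpoint Sm (m : nat) (g : C -> C) : Prop :=
  if m is m'.+1 then (forall z, derivable g z 1) /\ Sm m' (derive1 g) else True.

Lemma SmW m g : Sm m.+1 g -> Sm m g.
Proof. elim: m g => [//|m IH] g [dg Sg]; split => //; have := IH _ Sg; apply. Qed.

Lemma SmE m g : (forall k z, (k < m)%N -> derivable (derive1n k g) z 1) -> Sm m g.
Proof.
elim: m g => // m IH g H; split; first by move=> z; apply: (H 0%N z).
apply: IH => k z km; have := H k.+1 z km; by rewrite derive1Sn.
Qed.

Lemma Sm_add m g h : Sm m g -> Sm m h -> Sm m (fun x => g x + h x).
Proof.
elim: m g h => [//|m IH] g h [dg Sg] [dh Sh]; split; first by move=> z; apply: dadd.
have -> : derive1 (fun x => g x + h x) = fun x => derive1 g x + derive1 h x.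
  by apply/funext => x; apply: daddE.
have := IH _ _ Sg Sh; apply.
Qed.

Lemma Sm_cst m c : Sm m (fun _ => c).
Proof.
elim: m c => [//|m IH] c; split; first by move=> z; apply: (dcst c z).1.
have -> : derive1 (fun _ : C => c) = fun _ => 0.
  by apply/funext => x; apply: (dcst c x).2.
have := IH 0; apply.
Qed.

Lemma Sm_mul m g h : Sm m g -> Sm m h -> Sm m (fun x => g x * h x).
Proof.
elim: m g h => [//|m IH] g h [dg Sg] [dh Sh]; split; first by move=> z; apply: dmul.
have -> : derive1 (fun x => g x * h x) = fun x => derive1 g x * h x + g x * derive1 h x.
  by apply/funext => x; apply: dmulE.
have Sg' : Sm m g := @SmW m g (conj dg Sg).
have Sh' : Sm m h := @SmW m h (conj dh Sh).
have := @Sm_add m _ _ (IH _ _ Sg Sh') (IH _ _ Sg' Sh); apply.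
Qed.

Lemma Sm_nabla m c g : Sm m.+1 g -> Sm m (tnabla c g).
Proof.
move=> Sg; rewrite /tnabla.
have S1 : Sm m (derive1 g) by case: Sg.
have S2 : Sm m g by apply: SmW.
have := @Sm_add m _ _ S1 (@Sm_mul m _ _ (Sm_cst m c) S2); apply.
Qed.

Lemma Sm_iter m k c g : Sm (m + k) g -> Sm m (iter k (tnabla c) g).
Proof.
elim: k m => [|k IH] m; first by rewrite addn0.
rewrite addnS -addSn => S; rewrite iterS; apply: Sm_nabla; have := IH _ S; apply.
Qed.

Lemma Sm_der m k g : Sm (m + k) g -> Sm m (derive1n k g).
Proof.
elim: k m => [|k IH] m; first by rewrite addn0.
rewrite addnS -addSn => S; rewrite derive1nS; have := IH _ S; case=> _ D; apply: D.
Qed.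

Lemma Sm_der_d g N k z : Sm N g -> (k < N)%N -> derivable (derive1n k g) z 1.
Proof.
move=> S kN; have E : ((N - k.+1).+1 + k)%N = N by rewrite addSn -addnS subnK.
have S' : Sm ((N - k.+1).+1 + k) g by rewrite E.
have := @Sm_der (N - k.+1).+1 k g S'; case=> D _; apply: D.
Qed.

Lemma Sm_iter_d c g N k z : Sm N g -> (k < N)%N -> derivable (iter k (tnabla c) g) z 1.
Proof.
move=> S kN; have E : ((N - k.+1).+1 + k)%N = N by rewrite addSn -addnS subnK.
have S' : Sm ((N - k.+1).+1 + k) g by rewrite E.
have := @Sm_iter (N - k.+1).+1 k c g S'; case=> D _; apply: D.
Qed.

Lemma dsum (F : nat -> C -> C) m z : (forall k, (k < m)%N -> derivable (F k) z 1) ->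
  derivable (fun x => \sum_(0 <= k < m) F k x) z 1 /\
  derive1 (fun x => \sum_(0 <= k < m) F k x) z = \sum_(0 <= k < m) derive1 (F k) z.
Proof.
elim: m => [|m IH] H.
  have -> : (fun x => \sum_(0 <= k < 0) F k x) = fun _ => 0.
    by apply/funext => x; rewrite big_geq.
 
  rewrite big_geq //.
 have := dcst 0 z.
 apply.
have -> : (fun x => \sum_(0 <= k < m.+1) F k x) = fun x => (\sum_(0 <= k < m) F k x) + F m x.
  by apply/funext => x; rewrite big_nat_recr.

have [d1 e1] := IH (fun k km => H k (ltnW km)).
have d2 := H m (ltnSn m).

split. have := @dadd _ _ z d1 d2. apply.

rewrite (@daddE _ _ z d1 d2).
 rewrite e1 big_nat_recr //.
Qed.

Lemma dterm (a : C) (g h : C -> C) z : derivable g z 1 -> derivable h z 1 ->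
  derivable (fun x => a * (g x * h x)) z 1 /\
  derive1 (fun x => a * (g x * h x)) z = a * (derive1 g z * h z + g z * derive1 h z).
Proof.
move=> dg dh; have dgh := @dmul _ _ _ dg dh; have [dc ec] := dcst a z.
split; first by apply: dmul.
rewrite (@dmulE _ _ z dc dgh) ec (@dmulE _ _ z dg dh) mul0r add0r mulrC //.
Qed.


Lemma pascal (a b : nat -> C) j :
  \sum_(0 <= k < j.+1) 'C(j, k)%:R * (a (j - k).+1 * b k + a (j - k)%N * b k.+1)
  = \sum_(0 <= k < j.+2) 'C(j.+1, k)%:R * (a (j.+1 - k)%N * b k).
Proof.
rewrite [RHS]big_nat_recl // bin0 subn0.
under eq_bigr do rewrite binS subSS natrD mulrDl.
rewrite big_split /= [in RHS]big_nat_recr //= bin_small // mul0r addr0.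
under eq_bigr do rewrite mulrDr.
rewrite big_split /= big_nat_recl // bin0 subn0 -addrA; congr (_ + (_ + _)).
apply: eq_big_nat => i /andP[_ ij]; by rewrite subnSK.
Qed.

Lemma alg (a A F v v' c : C) : a * (A * v + F * v') + c * (a * (F * v)) = a * (A * v + F * (v' + c * v)).
Proof. ring. Qed.

Lemma leib c f s N j : Sm N f -> Sm N s -> (j <= N)%N ->
  iter j (tnabla c) (fun x => f x * s x) =
  fun x => \sum_(0 <= k < j.+1) 'C(j, k)%:R * (derive1n (j - k) f x * iter k (tnabla c) s x).
Proof.
move=> Sf Ss; elim: j => [|j IH] jN.
  by apply/funext => x; rewrite /= big_nat1 bin0 mul1r.
rewrite iterS IH ?(ltnW jN) //; apply/funext => x.
have TN : forall g, tnabla c g x = derive1 g x + c * g x by [].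
rewrite TN.
set F := fun k x => 'C(j, k)%:R * (derive1n (j - k) f x * iter k (tnabla c) s x).
have dF : forall k, (k < j.+1)%N -> derivable (F k) x 1.
  move=> k kj.
  have d1 : derivable (derive1n (j - k) f) x 1.
    apply: (@Sm_der_d f N); [exact: Sf | exact: leq_ltn_trans (leq_subr k j) jN].
  have d2 : derivable (iter k (tnabla c) s) x 1.
    apply: (@Sm_iter_d c s N); [exact: Ss | exact: leq_trans kj jN].
  have := (@dterm ('C(j, k)%:R) _ _ x d1 d2).1. apply.
have E := (@dsum F j.+1 x dF).2.
rewrite /F in E. rewrite E.
have P := pascal (fun m => derive1n m f x) (fun k => iter k (tnabla c) s x) j.
rewrite /= in P; rewrite -P mulr_sumr -big_split.
apply: eq_big_nat => k /andP[_ kj] /=.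
have d1 : derivable (derive1n (j - k) f) x 1.
  apply: (@Sm_der_d f N); [exact: Sf | exact: leq_ltn_trans (leq_subr k j) jN].
have d2 : derivable (iter k (tnabla c) s) x 1.
  apply: (@Sm_iter_d c s N); [exact: Ss | exact: leq_trans kj jN].
rewrite (@dterm ('C(j, k)%:R) _ _ x d1 d2).2 TN.
exact: alg.
Qed.
End S.

Theorem mainTheorem3 (R : realType) (n : nat) (gam : 'I_n -> cplx R)
    (f : cplx R -> cplx R) (s : 'I_n -> cplx R -> cplx R) :
  (0 < n)%N ->
  (forall (k : nat) (z : cplx R), (k < n.-1)%N -> derivable (derive1n k f) z 1) ->
  (forall (i : 'I_n) (k : nat) (z : cplx R), (k < n.-1)%N -> derivable (derive1n k (s i)) z 1) ->
  forall z : cplx R,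
    twronskian gam (fun i x => f x * s i x) z = f z ^+ n * twronskian gam s z.
Proof.
move=> n0 Hf Hs z.
pose N := n.-1.
have Sf : @Sm R N f := @SmE R N f Hf.
have Ss : forall i, @Sm R N (s i) := fun i => @SmE R N (s i) (Hs i).
rewrite /twronskian.
set A := \matrix_(i < n, j < n) iter j (tnabla (gam i)) (s i) z.
pose T : 'M[cplx R]_n := \matrix_(k < n, j < n)
   if (k <= j)%N then 'C(j, k)%:R * derive1n (j - k) f z else 0.
have -> : \matrix_(i < n, j < n) iter j (tnabla (gam i)) (fun x => f x * s i x) z = A *m T.
  apply/matrixP => i j; rewrite !mxE.
  have jN : (j <= N)%N by rewrite /N -ltnS prednK.
  rewrite (@leib R (gam i) f (s i) N j Sf (Ss i) jN) /=.
  pose H k := if (k <= j)%N then 'C(j, k)%:R * (derive1n (j - k) f z * iter k (tnabla (gam i)) (s i) z) else 0.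
  transitivity (\sum_(0 <= k < n) H k).
    rewrite (@big_cat_nat _ _ _ j.+1 0 n) //=.
    rewrite [X in _ + X]big1_seq ?addr0.
      apply: eq_big_nat => k /andP[_]; rewrite ltnS => kj; by rewrite /H kj.
    move=> k /andP[_]; rewrite mem_index_iota => /andP[jk _].
    by rewrite /H leqNgt jk.
  rewrite big_mkord; apply: eq_bigr => k _; rewrite !mxE /H.
  case: ifP => _; last by rewrite mulr0.
  by rewrite [RHS]mulrC -mulrA.
have DT : \det T = f z ^+ n.
  rewrite -det_tr (@det_trig _ _ T^T); last first.
    by apply/is_trig_mxP => i j ij; rewrite !mxE leqNgt ij.
  under eq_bigr do rewrite !mxE leqnn binn subnn mul1r.
  by rewrite prodr_const card_ord.
by rewrite det_mulmx DT mulrC.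
Qed.
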